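(* Let $V$ be a complex normed vector space and $x\in l^{\infty}(V)$. Then $p(x)=0$ if and only if $L(x)=0$ for every Banach limit functional $L$ on $l^\infty(V)$.
   Context: $\mathbb{N}=\{1,2,3,\dots\}$. $l^{\infty}(V)$ is the space of bounded sequences $x=\{x_n\}_{n=1}^\infty$ in $V$ with norm $\|x\|_\infty=\sup_n\|x_n\|_V$. $T$ is the left shift: $T\{x_1,x_2,x_3,\dots\}=\{x_2,x_3,\dots\}$. A Banach limit functional is a bounded (complex-)linear functional $L$ on $l^\infty(V)$ such that $\|L\|\le 1$ and $L(Tx)=L(x)$ for all $x\in l^\infty(V)$. For $x\in l^\infty(V)$, $p(x):=\lim_{n\to\infty}\left(\sup_{j\in\mathbb{N}}\frac1n\left\|\sum_{i=0}^{n-1}x_{i+j}\right\|_V\right)$ (this limit exists). *)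

(* Defs.v *)
From Stdlib Require Import Reals.
Open Scope R_scope.

Record Cplx := mkC { Re : R; Im : R }.
Definition C0 : Cplx := mkC 0 0.
Definition C1 : Cplx := mkC 1 0.
Definition Cadd (a b : Cplx) : Cplx := mkC (Re a + Re b) (Im a + Im b).
Definition Cmul (a b : Cplx) : Cplx :=
  mkC (Re a * Re b - Im a * Im b) (Re a * Im b + Im a * Re b).
Definition Cabs (a : Cplx) : R := sqrt (Re a * Re a + Im a * Im a).

Record NormedCSpace := {
  vT :> Type;
  vzero : vT;
  vadd : vT -> vT -> vT;
  vopp : vT -> vT;
  vscal : Cplx -> vT -> vT;
  vnorm : vT -> R;
  vaddA : forall u v w, vadd u (vadd v w) = vadd (vadd u v) w;
  vaddC : forall u v, vadd u v = vadd v u;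
  vadd0 : forall u, vadd u vzero = u;
  vaddN : forall u, vadd u (vopp u) = vzero;
  vscal_addl : forall a b u, vscal (Cadd a b) u = vadd (vscal a u) (vscal b u);
  vscal_addr : forall a u v, vscal a (vadd u v) = vadd (vscal a u) (vscal a v);
  vscal_mul : forall a b u, vscal (Cmul a b) u = vscal a (vscal b u);
  vscal1 : forall u, vscal C1 u = u;
  vnorm_triangle : forall u v, vnorm (vadd u v) <= vnorm u + vnorm v;
  vnorm_scal : forall a u, vnorm (vscal a u) = Cabs a * vnorm u;
  vnorm_eq0 : forall u, vnorm u = 0 -> u = vzero
}.

Section Seqs.
Variable V : NormedCSpace.

(* A sequence {x_1, x_2, ...} is represented by x : nat -> V with x 0 = x_1. *)
Definition linf_bounded (x : nat -> V) : Prop :=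
  exists M, forall n, vnorm V (x n) <= M.

Definition seq_add (x y : nat -> V) : nat -> V := fun n => vadd V (x n) (y n).
Definition seq_scal (a : Cplx) (x : nat -> V) : nat -> V := fun n => vscal V a (x n).

Definition shift (x : nat -> V) : nat -> V := fun n => x (S n).

(* L is given as a function on all
   sequences; only its values on linf_bounded sequences (= l^oo(V)) matter.
   ||L|| <= 1 is written out as |L x| <= ||x||_oo, i.e. |L x| <= M for every
   bound M of the norms of the x_n. *)
Definition BanachLimit (L : (nat -> V) -> Cplx) : Prop :=
  (forall x y, linf_bounded x -> linf_bounded y -> L (seq_add x y) = Cadd (L x) (L y)) /\
  (forall a x, linf_bounded x -> L (seq_scal a x) = Cmul a (L x)) /\
  (forall x M, linf_bounded x -> (forall n, vnorm V (x n) <= M) -> Cabs (L x) <= M) /\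
  (forall x, linf_bounded x -> L (shift x) = L x).

Fixpoint vsum (f : nat -> V) (n : nat) : V :=
  match n with
  | O => vzero V
  | S k => vadd V (vsum f k) (f k)
  end.

Definition avg (x : nat -> V) (n j : nat) : R :=
  / INR n * vnorm V (vsum (fun i => x (i + j)%nat) n).

(* p_val x l  :<->  p(x) = l, i.e. s_n := sup_j avg x n j  (n >= 1)
   exists and s_n -> l. *)
Definition p_val (x : nat -> V) (l : R) : Prop :=
  exists s : nat -> R,
    (forall n, is_lub (fun r => exists j, r = avg x (S n) j) (s n)) /\
    Un_cv s l.

End Seqs.
Arguments linf_bounded {V}.
Arguments BanachLimit {V}.
Arguments p_val {V}.

(* Main.v *)
Require Import Defs.
From Stdlib Require Import Reals Lra Lia Classical ClassicalEpsilon FunctionalExtensionality ProofIrrelevance.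
Open Scope R_scope.

Definition Sup (A : R -> Prop) : R := epsilon (inhabits 0) (fun l => is_lub A l).

Lemma Sup_lub (A : R -> Prop) : (exists x, A x) -> (exists m, forall a, A a -> a <= m) -> is_lub A (Sup A).
Proof.
  intros [x Hx] [m Hm]. unfold Sup. apply epsilon_spec.
  destruct (completeness A) as [l Hl]. exists m. intros a Ha; auto. exists x; auto. exists l; auto.
Qed.

Lemma Sup_ub (A : R -> Prop) a : (exists m, forall a, A a -> a <= m) -> A a -> a <= Sup A.
Proof. intros Hb Ha. apply (Sup_lub A). exists a; auto. auto. auto. Qed.

Lemma Sup_le (A : R -> Prop) m : (exists x, A x) -> (forall a, A a -> a <= m) -> Sup A <= m.
Proof. intros Hn Hm. apply (Sup_lub A); [auto | exists m; auto | auto]. Qed.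

Definition Inf (A : R -> Prop) : R := - Sup (fun r => A (- r)).

Lemma Inf_le (A : R -> Prop) a : (exists m, forall a, A a -> m <= a) -> A a -> Inf A <= a.
Proof.
  intros [m Hm] Ha. unfold Inf. assert (- a <= Sup (fun r => A (- r))).
  apply Sup_ub. exists (- m). intros b Hb. specialize (Hm _ Hb). lra.
  rewrite Ropp_involutive; auto. lra.
Qed.

Lemma le_Inf (A : R -> Prop) m : (exists x, A x) -> (forall a, A a -> m <= a) -> m <= Inf A.
Proof.
  intros [x Hx] Hm. unfold Inf. assert (Sup (fun r => A (- r)) <= - m).
  apply Sup_le. exists (- x). rewrite Ropp_involutive; auto.
  intros a Ha. specialize (Hm _ Ha). lra. lra.
Qed.

(* Bourbaki-Witt *)
Definition chain {X} (le : X -> X -> Prop) (C : X -> Prop) :=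
  forall a b, C a -> C b -> le a b \/ le b a.

Inductive tower {X} (le : X -> X -> Prop) (f : X -> X) (sup : (X -> Prop) -> X) : X -> Prop :=
| tw_f : forall x, tower le f sup x -> tower le f sup (f x)
| tw_sup : forall C, (forall c, C c -> tower le f sup c) -> chain le C -> tower le f sup (sup C).

Lemma BW (X : Type) (le : X -> X -> Prop) (S : X -> Prop) (f : X -> X) (sup : (X -> Prop) -> X)
  (refl : forall x, le x x) (trans : forall x y z, le x y -> le y z -> le x z)
  (antisym : forall x y, le x y -> le y x -> x = y)
  (fS : forall x, S x -> S (f x)) (fext : forall x, S x -> le x (f x))
  (supS : forall C, (forall c, C c -> S c) -> chain le C -> S (sup C))
  (supub : forall C, (forall c, C c -> S c) -> chain le C -> forall c, C c -> le c (sup C))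
  (supl : forall C b, (forall c, C c -> S c) -> chain le C -> S b -> (forall c, C c -> le c b) -> le (sup C) b) :
  exists m, S m /\ f m = m.
Proof.
  set (T := tower le f sup).
  assert (TS : forall x, T x -> S x).
  { intros x H; induction H; auto. }
  set (ext := fun c => T c /\ forall x, T x -> le x c -> x <> c -> le (f x) c).
  assert (L1 : forall c, ext c -> forall x, T x -> le x c \/ le (f c) x).
  { intros c [Tc Hc] x Tx. induction Tx as [x Tx IH | C HC IH Hch].
    - destruct IH as [H|H].
      + destruct (classic (x = c)) as [->|Hne]. right; apply refl. left; apply Hc; auto.
      + right. apply trans with x; auto.
    - destruct (classic (exists c', C c' /\ le (f c) c')) as [[c' [H1 H2]]|Hn].
      + right. apply trans with c'; auto. apply supub; auto. intros; apply TS; apply HC; auto.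
      + left. apply supl; auto. intros; apply TS; apply HC; auto.
        intros c' Hc'. destruct (IH c' Hc') as [H|H]; auto. exfalso; eauto. }
  assert (L2 : forall c, T c -> ext c).
  { intros c Tc. induction Tc as [c Tc IH | C HC IH Hch].
    - split. apply tw_f; auto.
      intros x Tx Hle Hne. destruct (L1 c IH x Tx) as [H|H].
      + destruct (classic (x = c)) as [->|Hne2]. apply refl.
        apply trans with c. apply (proj2 IH); auto. apply fext; apply TS; auto.
      + exfalso. apply Hne. apply antisym; auto.
    - split. apply tw_sup; auto.
      intros x Tx Hle Hne.
      destruct (classic (exists c', C c' /\ le x c' /\ x <> c')) as [[c' [H1 [H2 H3]]]|Hn].
      + apply trans with c'. apply (proj2 (IH c' H1)); auto. apply supub; auto. intros; apply TS; apply HC; auto.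
      + exfalso. apply Hne. apply antisym; auto. apply supl; [intros; apply TS; apply HC; auto | auto | apply TS; auto | ].
        intros c' Hc'. destruct (L1 c' (IH c' Hc') x Tx) as [H|H].
        * destruct (classic (x = c')) as [->|Hne2]. apply refl. exfalso; eauto.
        * apply trans with (f c'); auto. apply fext; apply TS; apply HC; auto. }
  assert (Tch : chain le T).
  { intros a b Ta Tb. destruct (L1 a (L2 a Ta) b Tb) as [H|H]; auto.
    left. apply trans with (f a); auto. }
  assert (Tm : T (sup T)) by (apply tw_sup; auto).
  exists (sup T). split. apply TS; auto.
  apply antisym. apply supub; auto. apply tw_f; auto. apply fext; apply TS; auto.
Qed.

Definition rs (V : NormedCSpace) (t : R) (u : V) : V := vscal V (mkC t 0) u.

Lemma vadd0l (V : NormedCSpace) (u : V) : vadd V (vzero V) u = u.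
Proof. rewrite vaddC, vadd0; auto. Qed.

Lemma vaddNl (V : NormedCSpace) (u : V) : vadd V (vopp V u) u = vzero V.
Proof. rewrite vaddC, vaddN; auto. Qed.

Lemma vadd_cancel (V : NormedCSpace) (a b c : V) : vadd V a b = vadd V a c -> b = c.
Proof.
  intros H. rewrite <- (vadd0l V b), <- (vadd0l V c), <- (vaddNl V a), <- !vaddA, H; auto.
Qed.

Lemma vscal0 (V : NormedCSpace) (u : V) : vscal V C0 u = vzero V.
Proof.
  apply (vadd_cancel V (vscal V C0 u)). rewrite vadd0, <- vscal_addl.
  f_equal. unfold C0, Cadd; simpl; f_equal; ring.
Qed.

Lemma rs_add (V : NormedCSpace) a b (u : V) : rs V (a + b) u = vadd V (rs V a u) (rs V b u).
Proof. unfold rs. rewrite <- vscal_addl. f_equal. unfold Cadd; simpl; f_equal; ring. Qed.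

Lemma rs_addr (V : NormedCSpace) t (u v : V) : rs V t (vadd V u v) = vadd V (rs V t u) (rs V t v).
Proof. unfold rs. apply vscal_addr. Qed.

Lemma rs_mul (V : NormedCSpace) a b (u : V) : rs V a (rs V b u) = rs V (a * b) u.
Proof. unfold rs. rewrite <- vscal_mul. f_equal. unfold Cmul; simpl; f_equal; ring. Qed.

Lemma rs1 (V : NormedCSpace) (u : V) : rs V 1 u = u.
Proof. apply vscal1. Qed.

Lemma rs0 (V : NormedCSpace) (u : V) : rs V 0 u = vzero V.
Proof. apply vscal0. Qed.

Lemma rsm1 (V : NormedCSpace) (u : V) : rs V (-1) u = vopp V u.
Proof.
  apply (vadd_cancel V u). rewrite vaddN. rewrite <- (rs1 V u) at 1.
  rewrite <- rs_add. replace (1 + -1) with 0 by ring. apply rs0.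
Qed.

Lemma Cabs_real (t : R) : Cabs (mkC t 0) = Rabs t.
Proof. unfold Cabs; simpl. replace (t * t + 0 * 0) with (Rsqr t) by (unfold Rsqr; ring). apply sqrt_Rsqr_abs. Qed.

Lemma vnorm_rs (V : NormedCSpace) t (u : V) : vnorm V (rs V t u) = Rabs t * vnorm V u.
Proof. unfold rs. rewrite vnorm_scal, Cabs_real; auto. Qed.

Lemma vnorm_zero (V : NormedCSpace) : vnorm V (vzero V) = 0.
Proof. rewrite <- (rs0 V (vzero V)), vnorm_rs, Rabs_R0. ring. Qed.

Lemma vnorm_nonneg (V : NormedCSpace) (u : V) : 0 <= vnorm V u.
Proof.
  pose proof (vnorm_triangle V u (rs V (-1) u)) as H.
  rewrite rsm1, vaddN, vnorm_zero in H. rewrite <- rsm1, vnorm_rs in H.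
  replace (Rabs (-1)) with 1 in H by (unfold Rabs; destruct Rcase_abs; lra). lra.
Qed.

Lemma vadd_swap4 (V : NormedCSpace) (a b c d : V) :
  vadd V (vadd V a b) (vadd V c d) = vadd V (vadd V a c) (vadd V b d).
Proof.
  rewrite !vaddA. f_equal. rewrite <- !vaddA. f_equal. apply vaddC.
Qed.

Lemma vadd_sub_l (V : NormedCSpace) (a b : V) : vadd V (vadd V a b) (vopp V a) = b.
Proof. rewrite (vaddC V a b), <- vaddA, vaddN, vadd0; auto. Qed.

Lemma vscal_decomp (V : NormedCSpace) a b (u : V) :
  vscal V (mkC a b) u = vadd V (rs V a u) (rs V b (vscal V (mkC 0 1) u)).
Proof.
  unfold rs. rewrite <- vscal_mul, <- vscal_addl. f_equal. unfold Cadd, Cmul; simpl; f_equal; ring.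
Qed.

Lemma vscal_ii (V : NormedCSpace) (u : V) :
  vscal V (mkC 0 1) (vscal V (mkC 0 1) u) = rs V (-1) u.
Proof. unfold rs. rewrite <- vscal_mul. f_equal. unfold Cmul; simpl; f_equal; ring. Qed.

Lemma vscal_i_rs (V : NormedCSpace) t (u : V) :
  vscal V (mkC 0 1) (rs V t u) = rs V t (vscal V (mkC 0 1) u).
Proof. unfold rs. rewrite <- !vscal_mul. f_equal. unfold Cmul; simpl; f_equal; ring. Qed.

Definition E (V : NormedCSpace) := {y : nat -> V | linf_bounded y}.

Lemma E_ext (V : NormedCSpace) (a b : E V) : (forall n, proj1_sig a n = proj1_sig b n) -> a = b.
Proof.
  destruct a as [a ha], b as [b hb]; simpl; intros H.
  assert (a = b) by (apply functional_extensionality; auto). subst b.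
  f_equal. apply proof_irrelevance.
Qed.

Lemma bnd_add (V : NormedCSpace) (x y : nat -> V) : linf_bounded x -> linf_bounded y -> linf_bounded (seq_add V x y).
Proof.
  intros [M HM] [N HN]. exists (M + N). intros n. unfold seq_add.
  eapply Rle_trans. apply vnorm_triangle. specialize (HM n); specialize (HN n); lra.
Qed.

Lemma bnd_scal (V : NormedCSpace) c (x : nat -> V) : linf_bounded x -> linf_bounded (seq_scal V c x).
Proof.
  intros [M HM]. exists (Cabs c * M). intros n. unfold seq_scal. rewrite vnorm_scal.
  apply Rmult_le_compat_l. unfold Cabs; apply sqrt_pos. auto.
Qed.

Lemma bnd_shift (V : NormedCSpace) (x : nat -> V) : linf_bounded x -> linf_bounded (shift V x).
Proof. intros [M HM]. exists M. intros n; apply HM. Qed.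

Lemma bnd_zero (V : NormedCSpace) : linf_bounded (fun _ : nat => vzero V).
Proof. exists 0. intros n. rewrite vnorm_zero. lra. Qed.

Definition eadd (V : NormedCSpace) (a b : E V) : E V :=
  exist _ (seq_add V (proj1_sig a) (proj1_sig b)) (bnd_add V _ _ (proj2_sig a) (proj2_sig b)).
Definition ecs (V : NormedCSpace) (c : Cplx) (a : E V) : E V :=
  exist _ (seq_scal V c (proj1_sig a)) (bnd_scal V c _ (proj2_sig a)).
Definition escal (V : NormedCSpace) (t : R) (a : E V) : E V := ecs V (mkC t 0) a.
Definition eshift (V : NormedCSpace) (a : E V) : E V :=
  exist _ (shift V (proj1_sig a)) (bnd_shift V _ (proj2_sig a)).
Definition ezero (V : NormedCSpace) : E V := exist _ (fun _ => vzero V) (bnd_zero V).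
Definition Ci : Cplx := mkC 0 1.

Ltac eext := apply E_ext; intro; simpl; unfold seq_add, seq_scal, shift; repeat change (vscal ?V (mkC ?t 0) ?u) with (rs V t u).

Lemma I1 V (z y : E V) : eadd V z (escal V 0 y) = z.
Proof. eext. rewrite rs0, vadd0; auto. Qed.
Lemma I2 V t (z y : E V) : eadd V (eadd V z (escal V t y)) (escal V (-1) z) = escal V t y.
Proof. eext. rewrite rsm1, vadd_sub_l; auto. Qed.
Lemma I3 V s t (z y : E V) : eadd V (escal V s z) (escal V (s * t) y) = escal V s (eadd V z (escal V t y)).
Proof. eext. rewrite rs_addr, rs_mul; auto. Qed.
Lemma I4 V t1 t2 (z1 z2 y : E V) :
  eadd V (eadd V z1 (escal V t1 y)) (eadd V z2 (escal V t2 y)) = eadd V (eadd V z1 z2) (escal V (t1 + t2) y).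
Proof. eext. rewrite rs_add, vadd_swap4; auto. Qed.
Lemma I5 V (z y : E V) : eadd V z (escal V 1 y) = eadd V z y.
Proof. eext. rewrite rs1; auto. Qed.
Lemma I6 V (y : E V) : eadd V y (escal V (-1) y) = ezero V.
Proof. eext. rewrite rsm1, vaddN; auto. Qed.
Lemma I7 V (y : E V) : escal V 0 y = ezero V.
Proof. eext. rewrite rs0; auto. Qed.
Lemma I8 V t (y : E V) : t <> 0 -> escal V (/ t) (escal V t y) = y.
Proof. intros Ht. eext. rewrite rs_mul. replace (/ t * t) with 1 by (field; auto). rewrite rs1; auto. Qed.
Lemma I9 V t (y : E V) : escal V (- t) y = escal V t (escal V (-1) y).
Proof. eext. rewrite rs_mul. f_equal. ring. Qed.
Lemma I10 V a b (z : E V) : ecs V (mkC a b) z = eadd V (escal V a z) (escal V b (ecs V Ci z)).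
Proof. eext. rewrite vscal_decomp; auto. Qed.
Lemma I11 V (z : E V) : ecs V Ci (ecs V Ci z) = escal V (-1) z.
Proof. eext. apply vscal_ii. Qed.
Lemma I12 V (a b : E V) : ecs V Ci (eadd V a b) = eadd V (ecs V Ci a) (ecs V Ci b).
Proof. eext. apply vscal_addr. Qed.
Lemma I13 V t (a : E V) : ecs V Ci (escal V t a) = escal V t (ecs V Ci a).
Proof. eext. apply vscal_i_rs. Qed.
Lemma I14 V (a : E V) : ecs V Ci (eshift V a) = eshift V (ecs V Ci a).
Proof. eext. auto. Qed.
Lemma I15 V (a : E V) : escal V 1 a = a.
Proof. eext. apply rs1. Qed.

Lemma I16 V (y : E V) : eadd V (escal V (-1) y) y = ezero V.
Proof. eext. rewrite rsm1, vaddNl; auto. Qed.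
Lemma I17 V : eadd V (ezero V) (ezero V) = ezero V.
Proof. eext. apply vadd0. Qed.

Definition subl V (q : E V -> R) :=
  (forall a b, q (eadd V a b) <= q a + q b) /\ (forall t a, 0 <= t -> q (escal V t a) <= t * q a).

Lemma subl_zero V q : subl V q -> q (ezero V) = 0.
Proof.
  intros [Ha Hh]. pose proof (Hh 0 (ezero V) (Rle_refl 0)) as H1. rewrite I7 in H1.
  pose proof (Ha (ezero V) (ezero V)) as H2. rewrite I17 in H2. lra.
Qed.

Lemma subl_hom V q t a : subl V q -> 0 <= t -> q (escal V t a) = t * q a.
Proof.
  intros Hq Ht. destruct (Req_dec t 0) as [->|Hne].
  - rewrite I7, subl_zero; auto. ring.
  - apply Rle_antisym. apply Hq; auto.
    pose proof (proj2 Hq (/ t) (escal V t a)) as H. rewrite I8 in H; auto.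
    assert (0 < t) by lra.
    assert (0 <= / t) by (left; apply Rinv_0_lt_compat; auto).
    specialize (H H1). apply Rmult_le_compat_l with (r := t) in H; [|lra].
    rewrite <- Rmult_assoc, Rinv_r in H; lra.
Qed.

Lemma subl_neg V q a : subl V q -> 0 <= q a + q (escal V (-1) a).
Proof. intros Hq. rewrite <- (subl_zero V q Hq), <- (I6 V a). apply Hq. Qed.

Definition qy V (q : E V -> R) (y z : E V) : R :=
  Inf (fun r => exists t, 0 <= t /\ r = q (eadd V z (escal V t y)) - t * q y).

Lemma qy_lbset V q y z : subl V q ->
  exists m, forall r, (exists t, 0 <= t /\ r = q (eadd V z (escal V t y)) - t * q y) -> m <= r.
Proof.
  intros Hq. exists (- q (escal V (-1) z)). intros r [t [Ht ->]].
  pose proof (proj1 Hq (eadd V z (escal V t y)) (escal V (-1) z)) as H.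
  rewrite I2, subl_hom in H; auto. lra.
Qed.

Lemma qy_le V q y z t : subl V q -> 0 <= t -> qy V q y z <= q (eadd V z (escal V t y)) - t * q y.
Proof. intros Hq Ht. apply Inf_le. apply qy_lbset; auto. exists t; auto. Qed.

Lemma qy_le_q V q y z : subl V q -> qy V q y z <= q z.
Proof. intros Hq. pose proof (qy_le V q y z 0 Hq (Rle_refl 0)). rewrite I1 in H. lra. Qed.

Lemma qy_ne V q y z : exists r, (exists t, 0 <= t /\ r = q (eadd V z (escal V t y)) - t * q y).
Proof. exists (q (eadd V z (escal V 0 y)) - 0 * q y). exists 0; split; auto; lra. Qed.

Lemma qy_subl V q y : subl V q -> subl V (qy V q y).
Proof.
  intros Hq. split.
  - intros a b.
    assert (qy V q y (eadd V a b) - qy V q y b <= qy V q y a); [|lra].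
    apply le_Inf. apply qy_ne. intros r1 [t1 [Ht1 ->]].
    assert (qy V q y (eadd V a b) - (q (eadd V a (escal V t1 y)) - t1 * q y) <= qy V q y b); [|lra].
    apply le_Inf. apply qy_ne. intros r2 [t2 [Ht2 ->]].
    pose proof (qy_le V q y (eadd V a b) (t1 + t2) Hq ltac:(lra)) as H.
    rewrite <- I4 in H. pose proof (proj1 Hq (eadd V a (escal V t1 y)) (eadd V b (escal V t2 y))). lra.
  - intros s a Hs. destruct (Req_dec s 0) as [->|Hne].
    + pose proof (qy_le V q y (escal V 0 a) 0 Hq (Rle_refl 0)) as H.
      rewrite !I7, I17, (subl_zero V q Hq) in H. rewrite I7. lra.
    + assert (Hs' : 0 < s) by lra.
      assert (/ s * qy V q y (escal V s a) <= qy V q y a).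
      { apply le_Inf. apply qy_ne. intros r [t [Ht ->]].
        pose proof (qy_le V q y (escal V s a) (s * t) Hq ltac:(apply Rmult_le_pos; lra)) as H.
        rewrite I3, (subl_hom V q s) in H; [|auto|lra].
        apply Rmult_le_compat_l with (r := / s) in H; [|left; apply Rinv_0_lt_compat; auto].
        replace (/ s * (s * q (eadd V a (escal V t y)) - s * t * q y)) with
          (q (eadd V a (escal V t y)) - t * q y) in H by (field; lra). auto. }
      apply Rmult_le_compat_l with (r := s) in H; [|lra].
      rewrite <- Rmult_assoc, Rinv_r in H; lra.
Qed.

Definition lin V (f : E V -> R) :=
  (forall a b, f (eadd V a b) = f a + f b) /\ (forall t a, f (escal V t a) = t * f a).

Lemma min_lin V m : subl V m -> (forall g, subl V g -> (forall z, g z <= m z) -> g = m) -> lin V m.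
Proof.
  intros Hm Hmin.
  assert (Hadd : forall a b, m (eadd V a b) = m a + m b).
  { intros a b. apply Rle_antisym. apply Hm.
    assert (E1 : qy V m b = m) by (apply Hmin; [apply qy_subl; auto | intros; apply qy_le_q; auto]).
    pose proof (qy_le V m b a 1 Hm ltac:(lra)) as H. rewrite E1, I5 in H. lra. }
  assert (Hneg : forall a, m (escal V (-1) a) = - m a).
  { intros a. pose proof (Hadd a (escal V (-1) a)). rewrite I6, subl_zero in H; auto. lra. }
  split; auto. intros t a. destruct (Rle_dec 0 t).
  - apply subl_hom; auto.
  - replace t with (- (- t)) by ring. rewrite I9, subl_hom, Hneg; [ring | auto | lra].
Qed.

Definition stepf V (S : (E V -> R) -> Prop) (g : E V -> R) : E V -> R :=
  match excluded_middle_informative (exists h, S h /\ (forall z, h z <= g z) /\ h <> g) with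
  | left H => proj1_sig (constructive_indefinite_description _ H)
  | right _ => g
  end.

Theorem HB V (P : E V -> R) (x0 : E V) : subl V P ->
  exists f, lin V f /\ (forall z, f z <= P z) /\ P x0 <= f x0.
Proof.
  intros HP. set (q0 := qy V P x0).
  assert (Hq0 : subl V q0) by (apply qy_subl; auto).
  set (S := fun g : E V -> R => subl V g /\ forall z, g z <= q0 z).
  set (le := fun g h : E V -> R => forall z, h z <= g z).
  set (sup := fun (C : (E V -> R) -> Prop) (z : E V) =>
     Inf (fun r => exists g, (g = q0 \/ C g) /\ r = g z)).
  assert (Dlb : forall C z, (forall c, C c -> S c) ->
     exists m, forall r, (exists g, (g = q0 \/ C g) /\ r = g z) -> m <= r).
  { intros C z HC. exists (- q0 (escal V (-1) z)). intros r [g [Hg ->]].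
    destruct Hg as [->|Hg].
    - pose proof (subl_neg V q0 z Hq0). lra.
    - destruct (HC g Hg) as [Hs Hle]. pose proof (subl_neg V g z Hs). specialize (Hle (escal V (-1) z)). lra. }
  assert (Dne : forall C z, exists r, exists g, (g = q0 \/ C g) /\ r = g z).
  { intros C z. exists (q0 z). exists q0; auto. }
  assert (DS : forall C g, (forall c, C c -> S c) -> (g = q0 \/ C g) -> S g).
  { intros C g HC [->|Hg]; auto. split; auto. intros; lra. }
  assert (Dch : forall C g1 g2, (forall c, C c -> S c) -> chain le C -> (g1 = q0 \/ C g1) -> (g2 = q0 \/ C g2) ->
     (forall z, g1 z <= g2 z) \/ (forall z, g2 z <= g1 z)).
  { intros C g1 g2 HC Hch [->|H1] [->|H2].
    - left; intros; lra.
    - right; apply (HC g2 H2).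
    - left; apply (HC g1 H1).
    - destruct (Hch g1 g2 H1 H2); auto. }
  destruct (BW (E V -> R) le S (stepf V S) sup) as [m [Sm Fm]].
  - intros g z; lra.
  - intros g h k H1 H2 z. specialize (H1 z); specialize (H2 z); lra.
  - intros g h H1 H2. apply functional_extensionality. intros z. specialize (H1 z); specialize (H2 z); lra.
  - intros g Hg. unfold stepf. destruct excluded_middle_informative as [H|H]; auto.
    destruct (constructive_indefinite_description _ H) as [h Hh]; simpl. apply Hh.
  - intros g Hg. unfold stepf. destruct excluded_middle_informative as [H|H]; [|unfold le; intros; lra].
    destruct (constructive_indefinite_description _ H) as [h Hh]; simpl. unfold le; apply Hh.
  - intros C HC Hch. split; [split|].
    + intros a b.
      assert (sup C (eadd V a b) - sup C b <= sup C a); [|lra].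
      apply le_Inf. apply Dne. intros r1 [g1 [Hg1 ->]].
      assert (sup C (eadd V a b) - g1 a <= sup C b); [|lra].
      apply le_Inf. apply Dne. intros r2 [g2 [Hg2 ->]].
      destruct (Dch C g1 g2 HC Hch Hg1 Hg2) as [H|H].
      * assert (sup C (eadd V a b) <= g1 (eadd V a b)) by (apply Inf_le; [apply Dlb; auto | exists g1; auto]).
        pose proof (proj1 (proj1 (DS C g1 HC Hg1)) a b). specialize (H b). lra.
      * assert (sup C (eadd V a b) <= g2 (eadd V a b)) by (apply Inf_le; [apply Dlb; auto | exists g2; auto]).
        pose proof (proj1 (proj1 (DS C g2 HC Hg2)) a b). specialize (H a). lra.
    + intros t a Ht. destruct (Req_dec t 0) as [->|Hne].
      * assert (sup C (escal V 0 a) <= q0 (escal V 0 a)) by (apply Inf_le; [apply Dlb; auto | exists q0; auto]).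
        rewrite I7, (subl_zero V q0 Hq0) in H. rewrite I7. lra.
      * assert (/ t * sup C (escal V t a) <= sup C a).
        { apply le_Inf. apply Dne. intros r [g [Hg ->]].
          assert (sup C (escal V t a) <= g (escal V t a)) by (apply Inf_le; [apply Dlb; auto | exists g; auto]).
          rewrite (subl_hom V g) in H; [|apply (DS C g HC Hg)|lra].
          apply Rmult_le_compat_l with (r := / t) in H; [|left; apply Rinv_0_lt_compat; lra].
          rewrite <- Rmult_assoc, Rinv_l in H; lra. }
        apply Rmult_le_compat_l with (r := t) in H; [|lra].
        rewrite <- Rmult_assoc, Rinv_r in H; lra.
    + intros z. apply Inf_le. apply Dlb; auto. exists q0; auto.
  - intros C HC Hch c Hc z. apply Inf_le. apply Dlb; auto. exists c; auto.
  - intros C b HC Hch Hb Hcb z. apply le_Inf. apply Dne. intros r [g [[->|Hg] ->]].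
    apply Hb. apply Hcb; auto.
  - assert (Hmin : forall g, subl V g -> (forall z, g z <= m z) -> g = m).
    { intros g Hg Hgm. apply NNPP. intros Hne.
      assert (Hex : exists h, S h /\ (forall z, h z <= m z) /\ h <> m).
      { exists g. split; [split; auto|split; auto]. intros z; specialize (Hgm z); pose proof (proj2 Sm z); lra. }
      unfold stepf in Fm. destruct excluded_middle_informative as [H|H]; [|contradiction].
      destruct (constructive_indefinite_description _ H) as [h Hh]; simpl in Fm. apply Hh; auto. }
    assert (Hl : lin V m) by (apply min_lin; [apply Sm | auto]).
    exists m. split; auto. split.
    + intros z. pose proof (proj2 Sm z). pose proof (qy_le_q V P x0 z HP). unfold q0 in *. lra.
    + pose proof (proj2 Sm (escal V (-1) x0)). pose proof (qy_le V P x0 (escal V (-1) x0) 1 HP ltac:(lra)).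
      rewrite I5, I16, subl_zero in H0; auto. rewrite (proj2 Hl) in H. unfold q0 in H. lra.
Qed.

Definition savg (V : NormedCSpace) (y : nat -> V) (n : nat) : R := Sup (fun r => exists j, r = avg V y (S n) j).
Definition Ptail (V : NormedCSpace) (y : nat -> V) (N : nat) : R := Sup (fun u => exists n, (N <= n)%nat /\ u = savg V y n).
Definition Pf (V : NormedCSpace) (y : E V) : R := Inf (fun r => exists N, r = Ptail V (proj1_sig y) N).

Lemma vsum_norm (V : NormedCSpace) (f : nat -> V) M n : (forall i, vnorm V (f i) <= M) -> vnorm V (vsum V f n) <= INR n * M.
Proof.
  intros H. induction n.
  - simpl. rewrite vnorm_zero. lra.
  - change (vsum V f (S n)) with (vadd V (vsum V f n) (f n)). eapply Rle_trans. apply vnorm_triangle. rewrite S_INR. specialize (H n). lra.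
Qed.

Lemma avg_nonneg (V : NormedCSpace) y m j : 0 <= avg V y m j.
Proof. unfold avg. destruct m. simpl. rewrite Rinv_0. lra.
  apply Rmult_le_pos. left; apply Rinv_0_lt_compat, lt_0_INR; lia. apply vnorm_nonneg. Qed.

Lemma avg_bound (V : NormedCSpace) (y : nat -> V) M n j : (forall k, vnorm V (y k) <= M) -> avg V y (S n) j <= M.
Proof.
  intros H. unfold avg. pose proof (vsum_norm V (fun i => y (i + j)%nat) M (S n) (fun i => H _)).
  assert (0 < INR (S n)) by (apply lt_0_INR; lia).
  apply Rmult_le_compat_l with (r := / INR (S n)) in H0; [|left; apply Rinv_0_lt_compat; auto].
  rewrite <- Rmult_assoc, Rinv_l in H0; lra.
Qed.

Lemma bnd_M (V : NormedCSpace) (y : nat -> V) : linf_bounded y -> exists M, 0 <= M /\ forall k, vnorm V (y k) <= M.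
Proof. intros [M HM]. exists M. split; auto. pose proof (vnorm_nonneg V (y 0%nat)); specialize (HM 0%nat); lra. Qed.

Lemma savg_set_bnd (V : NormedCSpace) (y : nat -> V) M n : (forall k, vnorm V (y k) <= M) ->
  exists m, forall a, (exists j, a = avg V y (S n) j) -> a <= m.
Proof. intros H. exists M. intros a [j ->]. apply avg_bound; auto. Qed.

Lemma savg_ne (V : NormedCSpace) (y : nat -> V) n : exists a, exists j, a = avg V y (S n) j.
Proof. exists (avg V y (S n) 0). exists 0%nat; auto. Qed.

Lemma savg_le (V : NormedCSpace) (y : nat -> V) M n : (forall k, vnorm V (y k) <= M) -> savg V y n <= M.
Proof. intros H. apply Sup_le. apply savg_ne. intros a [j ->]. apply avg_bound; auto. Qed.

Lemma savg_ge (V : NormedCSpace) (y : nat -> V) M n j : (forall k, vnorm V (y k) <= M) -> avg V y (S n) j <= savg V y n.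
Proof. intros H. apply Sup_ub. eapply savg_set_bnd; eauto. exists j; auto. Qed.

Lemma savg_nonneg (V : NormedCSpace) (y : nat -> V) M n : (forall k, vnorm V (y k) <= M) -> 0 <= savg V y n.
Proof. intros H. eapply Rle_trans. apply (avg_nonneg V y (S n) 0). eapply savg_ge; eauto. Qed.

Lemma Ptail_set_bnd (V : NormedCSpace) (y : nat -> V) M N : (forall k, vnorm V (y k) <= M) ->
  exists m, forall a, (exists n, (N <= n)%nat /\ a = savg V y n) -> a <= m.
Proof. intros H. exists M. intros a [n [_ ->]]. eapply savg_le; eauto. Qed.

Lemma Ptail_ne (V : NormedCSpace) (y : nat -> V) N : exists a, exists n, (N <= n)%nat /\ a = savg V y n.
Proof. exists (savg V y N). exists N; auto. Qed.

Lemma Ptail_ge (V : NormedCSpace) (y : nat -> V) M N n : (forall k, vnorm V (y k) <= M) -> (N <= n)%nat -> savg V y n <= Ptail V y N.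
Proof. intros H Hn. apply Sup_ub. eapply Ptail_set_bnd; eauto. exists n; auto. Qed.

Lemma Ptail_le (V : NormedCSpace) (y : nat -> V) M N : (forall k, vnorm V (y k) <= M) -> Ptail V y N <= M.
Proof. intros H. apply Sup_le. apply Ptail_ne. intros a [n [_ ->]]. eapply savg_le; eauto. Qed.

Lemma Ptail_nonneg (V : NormedCSpace) (y : nat -> V) M N : (forall k, vnorm V (y k) <= M) -> 0 <= Ptail V y N.
Proof. intros H. eapply Rle_trans. eapply (savg_nonneg V y M N); eauto. eapply Ptail_ge; eauto. Qed.

Lemma Ptail_mono (V : NormedCSpace) (y : nat -> V) M N1 N2 : (forall k, vnorm V (y k) <= M) -> (N1 <= N2)%nat -> Ptail V y N2 <= Ptail V y N1.
Proof. intros H HN. apply Sup_le. apply Ptail_ne. intros a [n [Hn ->]]. eapply Ptail_ge; eauto. lia. Qed.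

Lemma Pf_set_lb (V : NormedCSpace) (y : E V) : exists m, forall a, (exists N, a = Ptail V (proj1_sig y) N) -> m <= a.
Proof.
  destruct (bnd_M V _ (proj2_sig y)) as [M [HM0 HM]]. exists 0. intros a [N ->]. eapply Ptail_nonneg; eauto.
Qed.

Lemma Pf_ne (V : NormedCSpace) (y : E V) : exists a, exists N, a = Ptail V (proj1_sig y) N.
Proof. exists (Ptail V (proj1_sig y) 0). exists 0%nat; auto. Qed.

Lemma Pf_le (V : NormedCSpace) (y : E V) N : Pf V y <= Ptail V (proj1_sig y) N.
Proof. apply Inf_le. apply Pf_set_lb. exists N; auto. Qed.

Lemma Pf_bound (V : NormedCSpace) (y : E V) M : (forall k, vnorm V (proj1_sig y k) <= M) -> Pf V y <= M.
Proof. intros H. eapply Rle_trans. apply (Pf_le V y 0). eapply Ptail_le; eauto. Qed.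

Lemma vsum_add (V : NormedCSpace) (f g : nat -> V) n :
  vsum V (fun i => vadd V (f i) (g i)) n = vadd V (vsum V f n) (vsum V g n).
Proof.
  induction n; simpl. rewrite vadd0; auto. rewrite IHn. apply vadd_swap4.
Qed.

Lemma rs_zero (V : NormedCSpace) t : rs V t (vzero V) = vzero V.
Proof. apply vnorm_eq0. rewrite vnorm_rs, vnorm_zero. ring. Qed.

Lemma vsum_rs (V : NormedCSpace) t (f : nat -> V) n : vsum V (fun i => rs V t (f i)) n = rs V t (vsum V f n).
Proof. induction n; simpl. rewrite rs_zero; auto. rewrite IHn, rs_addr; auto. Qed.

Lemma avg_add (V : NormedCSpace) (y z : nat -> V) m j : avg V (seq_add V y z) m j <= avg V y m j + avg V z m j.
Proof.
  unfold avg, seq_add. rewrite vsum_add. rewrite <- Rmult_plus_distr_l.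
  apply Rmult_le_compat_l. destruct m. simpl; rewrite Rinv_0; lra. left; apply Rinv_0_lt_compat, lt_0_INR; lia.
  apply vnorm_triangle.
Qed.

Lemma avg_scal (V : NormedCSpace) (y : nat -> V) t m j : 0 <= t -> avg V (seq_scal V (mkC t 0) y) m j = t * avg V y m j.
Proof.
  intros Ht. unfold avg, seq_scal. change (vscal V (mkC t 0)) with (rs V t).
  rewrite vsum_rs, vnorm_rs, Rabs_right by lra. ring.
Qed.

Lemma Pf_subl (V : NormedCSpace) : subl V (Pf V).
Proof.
  split.
  - intros a b. destruct a as [y hy], b as [z hz].
    destruct (bnd_M V _ hy) as [My [_ HMy]]. destruct (bnd_M V _ hz) as [Mz [_ HMz]].
    assert (HS : forall n, savg V (seq_add V y z) n <= savg V y n + savg V z n).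
    { intros n. apply Sup_le. apply savg_ne. intros r [j ->]. eapply Rle_trans. apply avg_add.
      pose proof (savg_ge V y My n j HMy). pose proof (savg_ge V z Mz n j HMz). lra. }
    assert (HT : forall N, Ptail V (seq_add V y z) N <= Ptail V y N + Ptail V z N).
    { intros N. apply Sup_le. apply Ptail_ne. intros r [n [Hn ->]]. eapply Rle_trans. apply HS.
      pose proof (Ptail_ge V y My N n HMy Hn). pose proof (Ptail_ge V z Mz N n HMz Hn). lra. }
    assert (Pf V (eadd V (exist (fun u => linf_bounded u) y hy) (exist (fun u => linf_bounded u) z hz)) - Pf V (exist (fun u => linf_bounded u) z hz) <=
            Pf V (exist (fun u => linf_bounded u) y hy)); [|lra].
    apply (le_Inf _ _ (Pf_ne V (exist (fun u => linf_bounded u) y hy))). intros r1 [N1 ->].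
    assert (Pf V (eadd V (exist (fun u => linf_bounded u) y hy) (exist (fun u => linf_bounded u) z hz)) - Ptail V y N1 <= Pf V (exist (fun u => linf_bounded u) z hz)); [|simpl in *; lra].
    apply (le_Inf _ _ (Pf_ne V (exist (fun u => linf_bounded u) z hz))). intros r2 [N2 ->]. simpl.
    pose proof (Pf_le V (eadd V (exist (fun u => linf_bounded u) y hy) (exist (fun u => linf_bounded u) z hz)) (max N1 N2)) as H. simpl in H.
    pose proof (HT (max N1 N2)).
    pose proof (Ptail_mono V y My N1 (max N1 N2) HMy ltac:(lia)).
    pose proof (Ptail_mono V z Mz N2 (max N1 N2) HMz ltac:(lia)). lra.
  - intros t a Ht. destruct a as [y hy].
    destruct (bnd_M V _ hy) as [My [_ HMy]].
    assert (HS : forall n, savg V (seq_scal V (mkC t 0) y) n <= t * savg V y n).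
    { intros n. apply Sup_le. apply savg_ne. intros r [j ->]. rewrite avg_scal; auto.
      apply Rmult_le_compat_l; auto. eapply savg_ge; eauto. }
    assert (HT : forall N, Ptail V (seq_scal V (mkC t 0) y) N <= t * Ptail V y N).
    { intros N. apply Sup_le. apply Ptail_ne. intros r [n [Hn ->]]. eapply Rle_trans. apply HS.
      apply Rmult_le_compat_l; auto. eapply Ptail_ge; eauto. }
    destruct (Req_dec t 0) as [->|Hne].
    + pose proof (Pf_le V (escal V 0 (exist (fun u => linf_bounded u) y hy)) 0) as H. simpl in H. specialize (HT 0%nat). lra.
    + assert (/ t * Pf V (escal V t (exist (fun u => linf_bounded u) y hy)) <= Pf V (exist (fun u => linf_bounded u) y hy)).
      { apply (le_Inf _ _ (Pf_ne V (exist (fun u => linf_bounded u) y hy))). intros r [N ->]. simpl.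
        pose proof (Pf_le V (escal V t (exist (fun u => linf_bounded u) y hy)) N) as H. simpl in H. specialize (HT N).
        assert (Pf V (escal V t (exist (fun u => linf_bounded u) y hy)) <= t * Ptail V y N) as H1 by lra.
        apply Rmult_le_compat_l with (r := / t) in H1; [|left; apply Rinv_0_lt_compat; lra].
        rewrite <- Rmult_assoc, Rinv_l in H1; lra. }
      apply Rmult_le_compat_l with (r := t) in H; [|lra].
      rewrite <- Rmult_assoc, Rinv_r in H; lra.
Qed.

Lemma small_le0 a c : 0 <= c -> (forall N, a <= c / (INR N + 1)) -> a <= 0.
Proof.
  intros Hc H. destruct (Rle_dec a 0) as [|Ha]; auto. exfalso.
  assert (Ha' : 0 < a) by lra.
  destruct (archimed_cor1 (a / (c + 1))) as [N [HN HN0]].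
  { apply Rdiv_lt_0_compat; lra. }
  specialize (H N). assert (0 < INR N) by (apply lt_0_INR; lia).
  assert (c / (INR N + 1) <= (c + 1) * / INR N).
  { unfold Rdiv. apply Rmult_le_compat; try lra. left; apply Rinv_0_lt_compat; lra.
    apply Rinv_le_contravar; lra. }
  assert ((c + 1) * / INR N < (c + 1) * (a / (c + 1))) by (apply Rmult_lt_compat_l; lra).
  replace ((c + 1) * (a / (c + 1))) with a in H2 by (field; lra). lra.
Qed.

Lemma telescope (V : NormedCSpace) (w : nat -> V) j m :
  vsum V (fun i => vadd V (w (S (i + j)%nat)) (vopp V (w (i + j)%nat))) m = vadd V (w (m + j)%nat) (vopp V (w j)).
Proof.
  induction m; simpl. rewrite vaddN; auto.
  rewrite IHm. rewrite (vaddC V (w (S (m + j))%nat) (vopp V (w (m + j)%nat))).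
  rewrite vaddA, vadd_sub_l. apply vaddC.
Qed.

Lemma Pf_shift (V : NormedCSpace) (w : E V) : Pf V (eadd V (eshift V w) (escal V (-1) w)) <= 0.
Proof.
  destruct w as [w hw]. destruct (bnd_M V _ hw) as [M [HM0 HM]].
  apply (small_le0 _ (2 * M)). lra. intros N.
  eapply Rle_trans. apply (Pf_le _ _ N). simpl.
  apply Sup_le. apply Ptail_ne. intros r [n [Hn ->]]. apply Sup_le. apply savg_ne. intros r [j ->].
  unfold avg, seq_add, seq_scal, shift. change (vscal V (mkC (-1) 0)) with (rs V (-1)).
  assert (Hs : vsum V (fun i => vadd V (w (S (i + j)%nat)) (rs V (-1) (w (i + j)%nat))) (S n)
           = vadd V (w (S n + j)%nat) (vopp V (w j))).
  { rewrite <- telescope. f_equal. apply functional_extensionality; intros i. rewrite rsm1; auto. }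
  rewrite Hs.
  assert (vnorm V (vadd V (w (S n + j)%nat) (vopp V (w j))) <= 2 * M).
  { eapply Rle_trans. apply vnorm_triangle. rewrite <- rsm1, vnorm_rs.
    replace (Rabs (-1)) with 1 by (unfold Rabs; destruct Rcase_abs; lra).
    pose proof (HM (S n + j)%nat). pose proof (HM j). lra. }
  assert (HN : INR N + 1 <= INR (S n)) by (rewrite S_INR; apply Rplus_le_compat_r, le_INR; auto).
  assert (0 < INR N + 1) by (pose proof (pos_INR N); lra).
  unfold Rdiv. rewrite (Rmult_comm (2 * M)).
  apply Rmult_le_compat; auto. left; apply Rinv_0_lt_compat; lra. apply vnorm_nonneg.
  apply Rinv_le_contravar; lra.
Qed.

Lemma Pf_small_pval (V : NormedCSpace) (x : nat -> V) (hx : linf_bounded x) :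
  Pf V (exist _ x hx) <= 0 -> p_val x 0.
Proof.
  intros HP. destruct (bnd_M V x hx) as [M [HM0 HM]].
  exists (savg V x). split.
  - intros n. apply Sup_lub. apply savg_ne. eapply savg_set_bnd; eauto.
  - intros eps Heps.
    assert (HN : exists N, Ptail V x N < eps).
    { apply NNPP. intros Hn. assert (eps <= Pf V (exist _ x hx)).
      { apply (le_Inf _ _ (Pf_ne V (exist _ x hx))). intros r [N ->]. simpl.
        apply Rnot_lt_le. intros Hl. apply Hn. exists N; auto. }
      lra. }
    destruct HN as [N HN]. exists N. intros n Hn. unfold R_dist. rewrite Rminus_0_r.
    pose proof (savg_nonneg V x M n HM). rewrite Rabs_right by lra.
    pose proof (Ptail_ge V x M N n HM Hn). lra.
Qed.

Definition Lc (V : NormedCSpace) (f : E V -> R) (y : nat -> V) : Cplx :=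
  match excluded_middle_informative (linf_bounded y) with
  | left h => mkC (f (exist (fun u => linf_bounded u) y h)) (- f (ecs V Ci (exist (fun u => linf_bounded u) y h)))
  | right _ => C0
  end.

Lemma Lc_eval (V : NormedCSpace) f y (h : linf_bounded y) :
  Lc V f y = mkC (f (exist (fun u => linf_bounded u) y h)) (- f (ecs V Ci (exist (fun u => linf_bounded u) y h))).
Proof.
  unfold Lc. destruct excluded_middle_informative as [h'|h']; [|contradiction].
  replace h' with h by apply proof_irrelevance. auto.
Qed.

Lemma lin_neg (V : NormedCSpace) f a : lin V f -> f (escal V (-1) a) = - f a.
Proof. intros Hf. rewrite (proj2 Hf). ring. Qed.

Lemma lin_shift (V : NormedCSpace) f a : lin V f -> (forall z, f z <= Pf V z) -> f (eshift V a) = f a.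
Proof.
  intros Hf HP.
  pose proof (HP (eadd V (eshift V a) (escal V (-1) a))) as H1. pose proof (Pf_shift V a).
  pose proof (HP (eadd V (eshift V (escal V (-1) a)) (escal V (-1) (escal V (-1) a)))) as H2.
  pose proof (Pf_shift V (escal V (-1) a)) as H4.
  assert (H3 : eshift V (escal V (-1) a) = escal V (-1) (eshift V a)) by (apply E_ext; auto).
  rewrite H3 in H2, H4. rewrite (proj1 Hf), !(lin_neg V f) in H1, H2; auto. rewrite !(lin_neg V f) in H2; auto. lra.
Qed.

Lemma Lc_scal (V : NormedCSpace) f c y : lin V f -> linf_bounded y -> Lc V f (seq_scal V c y) = Cmul c (Lc V f y).
Proof.
  intros Hf h. destruct c as [a1 a2].
  rewrite (Lc_eval V f _ (bnd_scal V _ _ h)), (Lc_eval V f y h).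
  change (exist _ (seq_scal V (mkC a1 a2) y) (bnd_scal V (mkC a1 a2) y h)) with
    (ecs V (mkC a1 a2) (exist (fun u => linf_bounded u) y h)).
  set (z := exist (fun u => linf_bounded u) y h : E V).
  rewrite I10, I12, !I13, I11.
  rewrite !(proj1 Hf), !(proj2 Hf).
  unfold Cmul; simpl. f_equal; ring.
Qed.

Lemma Lc_banach (V : NormedCSpace) f : lin V f -> (forall z, f z <= Pf V z) -> BanachLimit (Lc V f).
Proof.
  intros Hf HP. split; [|split; [|split]].
  - intros x y hx hy.
    rewrite (Lc_eval V f _ (bnd_add V _ _ hx hy)), (Lc_eval V f x hx), (Lc_eval V f y hy).
    change (exist _ (seq_add V x y) (bnd_add V x y hx hy)) with
      (eadd V (exist (fun u => linf_bounded u) x hx) (exist (fun u => linf_bounded u) y hy)).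
    rewrite I12, !(proj1 Hf). unfold Cadd; simpl. f_equal; ring.
  - intros a x hx. apply Lc_scal; auto.
  - intros y M hy HM.
    destruct (Lc V f y) as [u v] eqn:Ew.
    assert (HM0 : 0 <= M) by (pose proof (vnorm_nonneg V (y 0%nat)); specialize (HM 0%nat); lra).
    unfold Cabs; simpl. set (r := sqrt (u * u + v * v)).
    assert (Hr0 : 0 <= r) by apply sqrt_pos.
    destruct (Req_dec r 0) as [Hr|Hr]. lra.
    assert (Hrp : 0 < r) by lra.
    assert (Hr2 : r * r = u * u + v * v) by (apply sqrt_sqrt; nra).
    set (c := mkC (u / r) (- v / r)).
    assert (Hc : Cabs c = 1).
    { unfold Cabs, c; simpl. replace (u / r * (u / r) + - v / r * (- v / r)) with 1. apply sqrt_1.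
      replace (u / r * (u / r) + - v / r * (- v / r)) with ((u * u + v * v) / (r * r)) by (field; lra). rewrite <- Hr2. field. lra. }
    assert (HL : Lc V f (seq_scal V c y) = Cmul c (mkC u v)) by (rewrite <- Ew; apply Lc_scal; auto).
    rewrite (Lc_eval V f _ (bnd_scal V c y hy)) in HL.
    assert (HRe : f (exist (fun u => linf_bounded u) (seq_scal V c y) (bnd_scal V c y hy)) = r).
    { apply (f_equal Re) in HL. simpl in HL. rewrite HL. unfold c; simpl.
      replace (u / r * u - - v / r * v) with ((u * u + v * v) / r) by (field; lra). rewrite <- Hr2. field. lra. }
    rewrite <- HRe. eapply Rle_trans. apply HP. apply Pf_bound. simpl. intros k.
    unfold seq_scal. rewrite vnorm_scal, Hc. specialize (HM k). lra.
  - intros x hx. rewrite (Lc_eval V f _ (bnd_shift V x hx)), (Lc_eval V f x hx).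
    change (exist _ (shift V x) (bnd_shift V x hx)) with (eshift V (exist (fun u => linf_bounded u) x hx)).
    rewrite I14, !(lin_shift V f); auto.
Qed.

Lemma bnd_off (V : NormedCSpace) (x : nat -> V) k : linf_bounded x -> linf_bounded (fun j => x (k + j)%nat).
Proof. intros [M HM]. exists M. intros n; apply HM. Qed.

Lemma shiftk_eq (V : NormedCSpace) L (x : nat -> V) k : BanachLimit L -> linf_bounded x ->
  L (fun j => x (k + j)%nat) = L x.
Proof.
  intros HL hx. induction k. reflexivity.
  assert (E1 : (fun j => x (S k + j)%nat) = shift V (fun j => x (k + j)%nat)).
  { apply functional_extensionality; intros j. unfold shift. f_equal. lia. }
  rewrite E1. destruct HL as [_ [_ [_ Hs]]]. rewrite Hs; auto. apply bnd_off; auto.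
Qed.

Lemma bnd_Y (V : NormedCSpace) (x : nat -> V) m : linf_bounded x ->
  linf_bounded (fun j => vsum V (fun i => x (i + j)%nat) m).
Proof.
  intros hx. induction m. simpl. apply bnd_zero.
  apply (bnd_add V (fun j => vsum V (fun i => x (i + j)%nat) m) (fun j => x (m + j)%nat)); auto.
  apply bnd_off; auto.
Qed.

Lemma L_zero (V : NormedCSpace) L : BanachLimit L -> L (fun _ : nat => vzero V) = C0.
Proof.
  intros HL. destruct HL as [Ha _].
  pose proof (Ha _ _ (bnd_zero V) (bnd_zero V)) as H.
  assert (E1 : seq_add V (fun _ : nat => vzero V) (fun _ : nat => vzero V) = (fun _ => vzero V)).
  { apply functional_extensionality; intros j. unfold seq_add. apply vadd0. }
  rewrite E1 in H. destruct (L (fun _ : nat => vzero V)) as [a b]. unfold Cadd in H; simpl in H.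
  injection H; intros. unfold C0. f_equal; lra.
Qed.

Lemma L_Y (V : NormedCSpace) L (x : nat -> V) m : BanachLimit L -> linf_bounded x ->
  L (fun j => vsum V (fun i => x (i + j)%nat) m) = mkC (INR m * Re (L x)) (INR m * Im (L x)).
Proof.
  intros HL hx. induction m.
  - simpl. rewrite L_zero; auto. unfold C0. f_equal; ring.
  - change (fun j => vsum V (fun i => x (i + j)%nat) (S m)) with
      (seq_add V (fun j => vsum V (fun i => x (i + j)%nat) m) (fun j => x (m + j)%nat)).
    pose proof HL as HL'. destruct HL' as [Ha _].
    rewrite Ha; [|apply bnd_Y; auto|apply bnd_off; auto].
    rewrite IHm, shiftk_eq; auto. rewrite S_INR. unfold Cadd; simpl. f_equal; ring.
Qed.

Lemma forward (V : NormedCSpace) (x : nat -> V) (hx : linf_bounded x) :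
  p_val x 0 -> forall L, BanachLimit L -> L x = C0.
Proof.
  intros [s [Hs Hcv]] L HL.
  assert (Hb : forall n, Cabs (L x) <= s n).
  { intros n. set (m := S n).
    set (Y := fun j => vsum V (fun i => x (i + j)%nat) m).
    assert (hY : linf_bounded Y) by (apply bnd_Y; auto).
    assert (Hm : 0 < INR m) by (apply lt_0_INR; unfold m; lia).
    assert (E1 : L (seq_scal V (mkC (/ INR m) 0) Y) = L x).
    { pose proof HL as HL2. destruct HL2 as [Ha [Hsc _]]. rewrite Hsc; auto. unfold Y. rewrite L_Y; auto.
      destruct (L x) as [a b]. unfold Cmul; cbn [Re Im]. f_equal; field; apply Rgt_not_eq; lra. }
    rewrite <- E1. destruct HL as [_ [_ [Hbd _]]]. apply Hbd. apply bnd_scal; auto.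
    intros j. unfold seq_scal. rewrite vnorm_scal, Cabs_real, Rabs_right.
    2: { left; apply Rinv_0_lt_compat; auto. }
    apply (proj1 (Hs n)). exists j. unfold avg, Y, m. auto. }
  assert (Hc : Cabs (L x) <= 0).
  { destruct (Rle_dec (Cabs (L x)) 0) as [|Hn]; auto. exfalso.
    destruct (Hcv (Cabs (L x)) ltac:(lra)) as [N HN]. specialize (HN N (Nat.le_refl N)).
    specialize (Hb N). unfold R_dist in HN. rewrite Rminus_0_r in HN.
    pose proof (Rle_abs (s N)). lra. }
  destruct (L x) as [a b]. unfold Cabs in Hc; simpl in Hc.
  assert (Hz : a * a + b * b = 0).
  { apply sqrt_eq_0. nra. pose proof (sqrt_pos (a * a + b * b)). lra. }
  unfold C0. f_equal; nra.
Qed.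

Theorem mainTheorem10 (V : NormedCSpace) (x : nat -> V) (hx : linf_bounded x) :
  p_val x 0 <-> (forall Lf : (nat -> V) -> Cplx, BanachLimit Lf -> Lf x = C0).
Proof.
  split.
  - intros Hp L HL. apply (forward V x hx); auto.
  - intros H. destruct (Rle_dec (Pf V (exist (fun u => linf_bounded u) x hx)) 0) as [Hle|Hgt].
    + apply (Pf_small_pval V x hx); auto.
    + exfalso. destruct (HB V (Pf V) (exist (fun u => linf_bounded u) x hx) (Pf_subl V)) as [f [Hl [Hf Hx0]]].
      specialize (H (Lc V f) (Lc_banach V f Hl Hf)). rewrite (Lc_eval V f x hx) in H.
      apply (f_equal Re) in H. simpl in H. lra.
Qed.
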